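(* Any cut-free derivation of a linguistically marked {\bf MLL1} sequent is linguistically marked (i.e. all sequents occurring in it are linguistically marked).
   Context: {\bf MLL1}: formulas built from atomic $p(x_1,\ldots,x_n)$ ($p$ positive or negative predicate symbol) by tensor $\otimes$, par $\wp$, $\forall x$, $\exists x$; sequent calculus rules: $\vdash\overline A,A$ for atomic $A$, Cut, $(\wp)$: $\vdash\Gamma,A,B\Rightarrow\vdash\Gamma,A\wp B$, $(\otimes)$: $\vdash\Gamma,A$, $\vdash B,\Theta\Rightarrow\vdash\Gamma,A\otimes B,\Theta$, $(\forall)$: $\vdash\Gamma,A[v/x]$, $v\notin FV(\Gamma)\Rightarrow\vdash\Gamma,\forall xA$, $(\exists)$: $\vdash\Gamma,A[v/x]\Rightarrow\vdash\Gamma,\exists xA$. In a linguistically marked language, each $n$-ary predicate symbol $p$ has a valency $(k,n-k)$ with $v(\overline p)=(n-k,k)$; the first $k$ argument occurrences of $p(x_1,\ldots,x_n)$ have left polarity and the rest right polarity, and polarity of an occurrence in a compound formula, context or sequent is inherited from the atomic formula containing it. A formula, context or sequent is linguistically marked if every quantifier binds exactly one left and one right variable occurrence. *)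

(* Defs.v *)
From Stdlib Require Import List Arith Bool Permutation.
Import ListNotations.

Definition var := nat.

(** A language: every predicate symbol [p] (a nat) has an arity [arity p]
    and a valency [(lval p, arity p - lval p)] for the positive symbol [p];
    the negative symbol [p-bar] then has valency [(arity p - lval p, lval p)]. *)
Record language := {
  arity : nat -> nat;
  lval : nat -> nat;
  lval_le : forall p, lval p <= arity p
}.

(** Formulas of MLL1. [Atom true p xs] is the positive atom p(xs),
    [Atom false p xs] the negative atom p-bar(xs). *)
Inductive formula : Type :=
| Atom (pos : bool) (p : nat) (args : list var)
| Tens (A B : formula)
| Par (A B : formula)
| All (x : var) (A : formula)
| Ex (x : var) (A : formula).

Fixpoint dual (A : formula) : formula :=
  match A with
  | Atom b p xs => Atom (negb b) p xs
  | Tens A B => Par (dual A) (dual B)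
  | Par A B => Tens (dual A) (dual B)
  | All x A => Ex x (dual A)
  | Ex x A => All x (dual A)
  end.

Fixpoint wf (L : language) (A : formula) : Prop :=
  match A with
  | Atom _ p xs => length xs = arity L p
  | Tens A B | Par A B => wf L A /\ wf L B
  | All _ A | Ex _ A => wf L A
  end.

Fixpoint freeb (x : var) (A : formula) : bool :=
  match A with
  | Atom _ _ xs => existsb (Nat.eqb x) xs
  | Tens A B | Par A B => freeb x A || freeb x B
  | All y A | Ex y A => negb (Nat.eqb y x) && freeb x A
  end.

Fixpoint subst (x v : var) (A : formula) : formula :=
  match A with
  | Atom b p xs => Atom b p (map (fun y => if Nat.eqb y x then v else y) xs)
  | Tens A B => Tens (subst x v A) (subst x v B)
  | Par A B => Par (subst x v A) (subst x v B)
  | All y A => if Nat.eqb y x then All y A else All y (subst x v A)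
  | Ex y A => if Nat.eqb y x then Ex y A else Ex y (subst x v A)
  end.

(** [v] is free for [x] in [A]: no free occurrence of [x] in [A] lies in the
    scope of a quantifier binding [v] (so A[v/x] is capture-free). *)
Fixpoint free_for (v x : var) (A : formula) : Prop :=
  match A with
  | Atom _ _ _ => True
  | Tens A B | Par A B => free_for v x A /\ free_for v x B
  | All y A | Ex y A =>
      if Nat.eqb y x then True
      else (freeb x A = true -> y <> v) /\ free_for v x A
  end.

(** Number of left polarity arguments of an atom: k for p of valency (k,n-k),
    n-k for p-bar of valency (n-k,k). *)
Definition nleft (L : language) (b : bool) (p : nat) : nat :=
  if b then lval L p else arity L p - lval L p.

Definition count_var (x : var) (xs : list var) : nat :=
  length (filter (Nat.eqb x) xs).

Fixpoint occL (L : language) (x : var) (A : formula) : nat :=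
  match A with
  | Atom b p xs => count_var x (firstn (nleft L b p) xs)
  | Tens A B | Par A B => occL L x A + occL L x B
  | All y A | Ex y A => if Nat.eqb y x then 0 else occL L x A
  end.

Fixpoint occR (L : language) (x : var) (A : formula) : nat :=
  match A with
  | Atom b p xs => count_var x (skipn (nleft L b p) xs)
  | Tens A B | Par A B => occR L x A + occR L x B
  | All y A | Ex y A => if Nat.eqb y x then 0 else occR L x A
  end.

Fixpoint fmarked (L : language) (A : formula) : Prop :=
  match A with
  | Atom _ _ _ => True
  | Tens A B | Par A B => fmarked L A /\ fmarked L B
  | All x A | Ex x A => occL L x A = 1 /\ occR L x A = 1 /\ fmarked L A
  end.

Definition sequent := list formula.

Definition seq_marked (L : language) (G : sequent) : Prop := Forall (fmarked L) G.
Definition seq_wf (L : language) (G : sequent) : Prop := Forall (wf L) G.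

Inductive deriv : sequent -> Type :=
| d_ax (b : bool) (p : nat) (xs : list var) :
    deriv [Atom (negb b) p xs; Atom b p xs]
| d_exch (G D : sequent) :
    Permutation G D -> deriv G -> deriv D
| d_cut (G : sequent) (A : formula) (D : sequent) :
    deriv (G ++ [A]) -> deriv (dual A :: D) -> deriv (G ++ D)
| d_par (G : sequent) (A B : formula) :
    deriv (G ++ [A; B]) -> deriv (G ++ [Par A B])
| d_tens (G : sequent) (A B : formula) (D : sequent) :
    deriv (G ++ [A]) -> deriv (B :: D) -> deriv (G ++ [Tens A B] ++ D)
| d_all (G : sequent) (x v : var) (A : formula) :
    free_for v x A -> Forall (fun C => freeb v C = false) G ->
    deriv (G ++ [subst x v A]) -> deriv (G ++ [All x A])
| d_ex (G : sequent) (x v : var) (A : formula) :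
    free_for v x A ->
    deriv (G ++ [subst x v A]) -> deriv (G ++ [Ex x A]).

Fixpoint cut_free {G : sequent} (d : deriv G) : Prop :=
  match d with
  | d_ax _ _ _ => True
  | d_exch _ _ _ d1 => cut_free d1
  | d_cut _ _ _ _ _ => False
  | d_par _ _ _ d1 => cut_free d1
  | d_tens _ _ _ _ d1 d2 => cut_free d1 /\ cut_free d2
  | d_all _ _ _ _ _ _ d1 => cut_free d1
  | d_ex _ _ _ _ _ d1 => cut_free d1
  end.

Fixpoint all_sequents (P : sequent -> Prop) {G : sequent} (d : deriv G) : Prop :=
  P G /\
  match d with
  | d_ax _ _ _ => True
  | d_exch _ _ _ d1 => all_sequents P d1
  | d_cut _ _ _ d1 d2 => all_sequents P d1 /\ all_sequents P d2
  | d_par _ _ _ d1 => all_sequents P d1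
  | d_tens _ _ _ _ d1 d2 => all_sequents P d1 /\ all_sequents P d2
  | d_all _ _ _ _ _ _ d1 => all_sequents P d1
  | d_ex _ _ _ _ _ d1 => all_sequents P d1
  end.

Definition deriv_marked (L : language) {G : sequent} (d : deriv G) : Prop :=
  all_sequents (seq_marked L) d.

(* Main.v *)
Require Import Defs.
From Stdlib Require Import List Arith Bool Permutation Lia.
Import ListNotations.

Lemma count_map (x v y : var) (l : list var) : y <> x -> y <> v ->
  count_var y (map (fun z => if Nat.eqb z x then v else z) l) = count_var y l.
Proof.
  intros H1 H2. unfold count_var. induction l as [|a l IH]; simpl; auto.
  destruct (Nat.eqb_spec a x).
  - subst. destruct (Nat.eqb_spec y v); [congruence|].
    destruct (Nat.eqb_spec y x); [congruence|]. exact IH.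
  - destruct (Nat.eqb_spec y a); simpl; rewrite IH; reflexivity.
Qed.

Lemma occ_subst L x v y A : y <> x -> y <> v ->
  occL L y (subst x v A) = occL L y A /\ occR L y (subst x v A) = occR L y A.
Proof.
  intros H1 H2. induction A; simpl.
  - rewrite firstn_map, skipn_map, !count_map; auto.
  - destruct IHA1, IHA2; split; congruence.
  - destruct IHA1, IHA2; split; congruence.
  - destruct (Nat.eqb x0 x); simpl; auto.
    destruct (Nat.eqb x0 y); auto.
  - destruct (Nat.eqb x0 x); simpl; auto.
    destruct (Nat.eqb x0 y); auto.
Qed.

Lemma subst_notfree x v A : freeb x A = false -> subst x v A = A.
Proof.
  induction A; simpl; intro H.
  - f_equal. induction args as [|a l IH]; simpl in *; auto.
    apply orb_false_iff in H as [Ha Hl].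
    rewrite IH by exact Hl. destruct (Nat.eqb_spec a x); auto.
    subst. rewrite Nat.eqb_refl in Ha. discriminate.
  - apply orb_false_iff in H as [Ha Hb]. rewrite IHA1, IHA2; auto.
  - apply orb_false_iff in H as [Ha Hb]. rewrite IHA1, IHA2; auto.
  - destruct (Nat.eqb x0 x); simpl in *; auto. rewrite IHA; auto.
  - destruct (Nat.eqb x0 x); simpl in *; auto. rewrite IHA; auto.
Qed.

Lemma marked_subst L x v A : free_for v x A -> fmarked L A -> fmarked L (subst x v A).
Proof.
  induction A; simpl; intros Hf Hm; auto.
  - destruct Hf, Hm; split; auto.
  - destruct Hf, Hm; split; auto.
  - destruct (Nat.eqb_spec x0 x); simpl; auto.
    destruct Hf as [Hf1 Hf2]. destruct Hm as (H1 & H2 & H3).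
    destruct (freeb x A) eqn:E.
    + destruct (occ_subst L x v x0 A n (Hf1 eq_refl)) as [E1 E2].
      rewrite E1, E2. auto.
    + rewrite subst_notfree by exact E. auto.
  - destruct (Nat.eqb_spec x0 x); simpl; auto.
    destruct Hf as [Hf1 Hf2]. destruct Hm as (H1 & H2 & H3).
    destruct (freeb x A) eqn:E.
    + destruct (occ_subst L x v x0 A n (Hf1 eq_refl)) as [E1 E2].
      rewrite E1, E2. auto.
    + rewrite subst_notfree by exact E. auto.
Qed.

Lemma main L (G : sequent) (d : deriv G) :
  seq_marked L G -> cut_free d -> deriv_marked L d.
Proof.
  unfold deriv_marked, seq_marked.
  induction d; simpl; intros Hm Hc.
  - split; auto.
  - split; auto. apply IHd; auto.
    apply (Permutation_Forall (Permutation_sym p)); auto.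
  - contradiction.
  - split; auto. apply IHd; auto.
    apply Forall_app in Hm as [H1 H2]. inversion H2; subst.
    simpl in *. destruct H3. apply Forall_app; split; auto.
  - destruct Hc. split; auto.
    apply Forall_app in Hm as [H1 H2]. inversion H2 as [|? ? H4 H5]; subst. simpl in *.
    destruct H4. split.

    + apply IHd1; auto. apply Forall_app; split; auto.
    + apply IHd2; auto.
  - split; auto. apply IHd; auto.
    apply Forall_app in Hm as [H1 H2]. inversion H2; subst. simpl in *.
    destruct H3 as (_ & _ & H3).
    apply Forall_app; split; auto. constructor; auto.
    apply marked_subst; auto.
  - split; auto. apply IHd; auto.
    apply Forall_app in Hm as [H1 H2]. inversion H2; subst. simpl in *.
    destruct H3 as (_ & _ & H3).
    apply Forall_app; split; auto. constructor; auto.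
    apply marked_subst; auto.
Qed.

Theorem proposition3p4 (L : language) (G : sequent) (d : deriv G) :
  seq_wf L G -> seq_marked L G -> cut_free d -> deriv_marked L d.
Proof.
  intros _. apply main.
Qed.
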